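(* Suppose that a pair $(\mathfrak m,\mathfrak m^* )$ of functions on the edges of the lattice strip is ICSH and has ICRBV. Then for every $y\in\mathbb Z$, $$\int_{\gamma_y}\big(\mathfrak m(z)\psi(z)\,dz+\mathfrak m^*(z)\psi^*(z)\,d\bar z\big)=\int_{\gamma_0}\big(\mathfrak m(z)\psi(z)\,dz+\mathfrak m^*(z)\psi^*(z)\,d\bar z\big).$$
   Context: Fix integers $a<0<b$, $C=\{a,\dots,b\}$, $C^*=\{a+\frac12,\dots,b-\frac12\}$. $\tilde V$ has orthonormal basis $(e_\rho)_{\rho\in\{\pm1\}^C}$. For $x'\in C^*$, $\varsigma_{x'}(\rho)$ flips the signs of $\rho_x$ for $x<x'$; $\psi_{x'}e_\rho=\frac{-\rho_{x'-1/2}+i\rho_{x'+1/2}}{\sqrt2}e_{\varsigma_{x'}(\rho)}$, $\psi^*_{x'}e_\rho=\frac{-i\rho_{x'-1/2}+\rho_{x'+1/2}}{\sqrt2}e_{\varsigma_{x'}(\rho)}$; $\mathrm{CliffGen}$ is their span. With $\beta=\frac12\log(\sqrt2+1)$: $T_h^{1/2}$ diagonal with entries $\exp(\frac\beta2\sum_{x=a}^{b-1}\rho_x\rho_{x+1})$, $e_\tau^\dagger T_ve_\rho=\exp(\beta\sum_{x=a}^b\rho_x\tau_x)\delta_{\tau_a\rho_a}\delta_{\tau_b\rho_b}$, $T=T_h^{1/2}T_vT_h^{1/2}$. The lattice strip: vertices $C\times\mathbb Z\subset\mathbb C$, nearest-neighbour edges $E$ identified with midpoints, faces with centres $p$; vertical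 edges $a+iy'$ / $b+iy'$ ($y'\in\mathbb Z+\frac12$) are left / right boundary edges. The fermions $\psi,\psi^*:E\to\mathrm{CliffGen}$ are the unique functions with $\psi(x'+iy)=T^{-y}\psi_{x'}T^y$, $\psi^*(x'+iy)=T^{-y}\psi^*_{x'}T^y$ on horizontal edges, such that for edges $z_1,z_2$ adjacent to a common vertex $v$ and face $p$, $\psi(z_1)+\frac{i|v-p|}{v-p}\psi^*(z_1)=\psi(z_2)+\frac{i|v-p|}{v-p}\psi^*(z_2)$, and $\psi(L)+i\psi^*(L)=0$, $\psi(R)-i\psi^*(R)=0$ on left/right boundary edges. For a contour $(w_0,\dots,w_m)$ with $z_j$ the edge joining $w_{j-1},w_j$: $\int(\mathfrak m\psi\,dz+\mathfrak m^*\psi^*\,d\bar z)=\sum_j(\mathfrak m(z_j)\psi(z_j)(w_j-w_{j-1})+\mathfrak m^*(z_j)\psi^*(z_j)\overline{(w_j-w_{j-1})})$. $\gamma_y=(a+iy,a+1+iy,\dots,b+iy)$. ICSH: for edges $z_1,z_2$ adjacent to a common vertex $v$ and face $p$, $\mathfrak m(z_1)-\frac{i|v-p|}{v-p}\mathfrak m^*(z_1)=\mathfrak m(z_2)-\frac{i|v-p|}{v-p}\mathfrak m^*(z_2)$. ICRBV: $\mathfrak m(L)-i\mathfrak m^*(L)=0$ and $\mathfrak m(R)+i\mathfrak m^*(R)=0$ on all left/right boundary edges $L,R$. *)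

(* Defs.v *)
From mathcomp Require Import all_boot all_order all_algebra.
From mathcomp Require Import reals sequences exp.
From mathcomp Require Export complex.
Set Implicit Arguments. Unset Strict Implicit. Unset Printing Implicit Defensive.
Import Order.TTheory GRing.Theory Num.Theory.
Local Open Scope ring_scope.
Local Open Scope complex_scope.

(* site index i : 'I_(b-a+1) represents x = a + i *)
Definition Sites (a b : int) := 'I_(absz (b - a)).+1.
(* rho : {+-1}^C, with true = +1, false = -1 *)
Definition Config (a b : int) := {ffun Sites a b -> bool}.

Definition site (a b : int) (x : int) : Sites a b := inord (absz (x - a)).

Definition spin (R : realType) (a b : int) (rho : Config a b) (x : int) : R :=
  if rho (site a b x) then 1 else -1.

(* dimension of tilde V, with orthonormal basis (e_rho) *)
Definition dimV (a b : int) := #|{: Config a b}|.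

(* operators on tilde V, as matrices in the basis (e_rho): the entry at
   (rank tau, rank rho) is e_tau^dagger A e_rho *)
Definition Op (R : realType) (a b : int) := 'M[R[i]]_(dimV a b).

Definition mkop (R : realType) (a b : int)
  (f : Config a b -> Config a b -> R[i]) : Op R a b :=
  \matrix_(i, j) f (enum_val i) (enum_val j).

Definition isum (R : realType) (lo hi : int) (F : int -> R) : R :=
  \sum_(k < (absz (hi - lo)).+1) F (lo + k%:Z).

(* varsigma_{x'} with x' = j + 1/2 : flips rho_x for all x < x', i.e. x <= j *)
Definition flip (a b : int) (j : int) (rho : Config a b) : Config a b :=
  [ffun i : Sites a b => if (a + (i : nat)%:Z <= j)%R then ~~ rho i else rho i].

Definition sqrt2C (R : realType) : R[i] := (Num.sqrt (2 : R))%:C.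

(* psi_{x'} and psi^*_{x'} for x' = j + 1/2 *)
Definition psiC (R : realType) (a b : int) (j : int) : Op R a b :=
  mkop (fun tau rho => if tau == flip j rho then
      ((- spin R rho j)%:C + 'i * (spin R rho (j + 1))%:C) / sqrt2C R
    else 0).

Definition psisC (R : realType) (a b : int) (j : int) : Op R a b :=
  mkop (fun tau rho => if tau == flip j rho then
      (- 'i * (spin R rho j)%:C + (spin R rho (j + 1))%:C) / sqrt2C R
    else 0).

Definition beta (R : realType) : R := ln (Num.sqrt (2 : R) + 1) / 2.

Definition Th_half (R : realType) (a b : int) : Op R a b :=
  mkop (fun tau rho => if tau == rho then
     (expR (beta R / 2 * isum a (b - 1) (fun x => spin R rho x * spin R rho (x + 1))))%:C
   else 0).

Definition Tv (R : realType) (a b : int) : Op R a b :=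
  mkop (fun tau rho =>
     (expR (beta R * isum a b (fun x => spin R rho x * spin R tau x)))%:C
     * (spin R tau a == spin R rho a)%:R * (spin R tau b == spin R rho b)%:R).

Definition Tmat (R : realType) (a b : int) : Op R a b :=
  Th_half R a b *m Tv R a b *m Th_half R a b.

Definition mxpowz (F : fieldType) (n : nat) (A : 'M[F]_n) (k : int) : 'M[F]_n :=
  match k with
  | Posz m => iter m (mulmx A) 1%:M
  | Negz m => iter m.+1 (mulmx (invmx A)) 1%:M
  end.

(* a point (X, Y) : int * int stands for X/2 + i Y/2.                 *)

Definition hpt (R : realType) (z : int * int) : R[i] :=
  (z.1%:~R / 2) +i* (z.2%:~R / 2).

Definition oddz (X : int) : bool := odd (absz X).

Definition is_vertex (a b : int) (z : int * int) : bool :=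
  [&& (2 * a <= z.1)%R, (z.1 <= 2 * b)%R, ~~ oddz z.1 & ~~ oddz z.2].

Definition is_edge (a b : int) (z : int * int) : bool :=
  [&& (2 * a <= z.1)%R, (z.1 <= 2 * b)%R & oddz z.1 != oddz z.2].

Definition is_face (a b : int) (z : int * int) : bool :=
  [&& (2 * a < z.1)%R, (z.1 < 2 * b)%R, oddz z.1 & oddz z.2].

(* an edge is adjacent to a vertex / face iff their distance is 1/2 *)
Definition adj (z w : int * int) : bool :=
  (absz (z.1 - w.1) + absz (z.2 - w.2) == 1)%N.

Definition lam (R : realType) (v p : int * int) : R[i] :=
  'i * `|hpt R v - hpt R p| / (hpt R v - hpt R p).

Definition left_bdry (a b : int) (z : int * int) : bool := (z.1 == 2 * a) && oddz z.2.
Definition right_bdry (a b : int) (z : int * int) : bool := (z.1 == 2 * b) && oddz z.2.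

Definition is_fermion (R : realType) (a b : int)
  (psi psis : int * int -> Op R a b) : Prop :=
  (forall j y : int, (a <= j)%R -> (j < b)%R ->
      psi (2 * j + 1, 2 * y)%R = mxpowz (Tmat R a b) (- y) *m psiC R a b j *m mxpowz (Tmat R a b) y
   /\ psis (2 * j + 1, 2 * y)%R = mxpowz (Tmat R a b) (- y) *m psisC R a b j *m mxpowz (Tmat R a b) y)
  /\ (forall z1 z2 v p, is_edge a b z1 -> is_edge a b z2 -> is_vertex a b v -> is_face a b p ->
       adj z1 v -> adj z1 p -> adj z2 v -> adj z2 p ->
       psi z1 + lam R v p *: psis z1 = psi z2 + lam R v p *: psis z2)
  /\ (forall z, left_bdry a b z -> psi z + 'i *: psis z = 0)
  /\ (forall z, right_bdry a b z -> psi z - 'i *: psis z = 0).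

Definition ICSH (R : realType) (a b : int) (m ms : int * int -> R[i]) : Prop :=
  forall z1 z2 v p, is_edge a b z1 -> is_edge a b z2 -> is_vertex a b v -> is_face a b p ->
    adj z1 v -> adj z1 p -> adj z2 v -> adj z2 p ->
    m z1 - lam R v p * ms z1 = m z2 - lam R v p * ms z2.

Definition ICRBV (R : realType) (a b : int) (m ms : int * int -> R[i]) : Prop :=
  (forall z, left_bdry a b z -> m z - 'i * ms z = 0)
  /\ (forall z, right_bdry a b z -> m z + 'i * ms z = 0).

(* Discrete contour integrals. A contour is a list of vertices given  *)
(* in plain integer coordinates (x, y) ~ x + i y; the edge z_j joining *)
(* w_{j-1}, w_j has doubled coordinates w_{j-1} + w_j.                 *)

Definition vpt (R : realType) (w : int * int) : R[i] := (w.1%:~R) +i* (w.2%:~R).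

Definition cint (R : realType) (a b : int) (m ms : int * int -> R[i])
  (psi psis : int * int -> Op R a b) (ws : seq (int * int)) : Op R a b :=
  \sum_(e <- zip ws (behead ws))
     let z := (e.1.1 + e.2.1, e.1.2 + e.2.2)%R in
     let dw := vpt R e.2 - vpt R e.1 in
     ((m z * dw) *: psi z + (ms z * dw^*) *: psis z).

Definition gamma (a b : int) (y : int) : seq (int * int) :=
  [seq (a + k%:Z, y)%R | k <- iota 0 (absz (b - a)).+1].

(* Main.v *)
Require Import Defs.
From mathcomp Require Import all_boot all_order all_algebra.
From mathcomp Require Import reals sequences exp complex.
From mathcomp Require Import ring zify.
Import GRing.Theory Num.Theory.
Local Open Scope ring_scope.

Lemma face_sc {F : fieldType} {j t : F} (hj : j*j = -1) (ht : t*t = j) (h2 : (2:F) != 0)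
 {mB nB xB yB mR nR xR yR mT nT xT yT mL nL xL yL : F} :
 mB - (j*t)*nB = mR - (j*t)*nR -> xB + (j*t)*yB = xR + (j*t)*yR ->
 mR - t*nR = mT - t*nT -> xR + t*yR = xT + t*yT ->
 mT - (-(j*t))*nT = mL - (-(j*t))*nL -> xT + (-(j*t))*yT = xL + (-(j*t))*yL ->
 mL - (-t)*nL = mB - (-t)*nB -> xL + (-t)*yL = xB + (-t)*yB ->
 (mB*xB + nB*yB) - (mT*xT + nT*yT) = (j*mL*xL - j*nL*yL) - (j*mR*xR - j*nR*yR).
Proof.
move=> h1 h1' h2' h2'' h3 h3' h4 h4'.
have K1B : (1+j)*(-t) + (1-j)*(j*t) = 0.
  have -> : (1+j)*(-t) + (1-j)*(j*t) = -t*(j*j+1) by ring.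
  by rewrite hj; ring.
have K1R : (j-1)*(j*t) + (1+j)*t = 0.
  have -> : (j-1)*(j*t) + (1+j)*t = t*(j*j+1) by ring.
  by rewrite hj; ring.
have K1T : -(1+j)*t + -(1-j)*(-(j*t)) = 0.
  have -> : -(1+j)*t + -(1-j)*(-(j*t)) = -t*(j*j+1) by ring.
  by rewrite hj; ring.
have K1L : (1-j)*(-(j*t)) + (-1-j)*(-t) = 0.
  have -> : (1-j)*(-(j*t)) + (-1-j)*(-t) = t*(j*j+1) by ring.
  by rewrite hj; ring.
have K2B : -((1+j)*((-t)*(-t)) + (1-j)*((j*t)*(j*t))) - 2 = 0.
  have -> : -((1+j)*((-t)*(-t)) + (1-j)*((j*t)*(j*t))) - 2
     = -((1+j) + (1-j)*(j*j))*(t*t) - 2 by ring.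
  rewrite ht hj.
  have -> : -((1 + j) + (1 - j) * -1) * j - 2 = -2 * (j*j) - 2 by ring.
  by rewrite hj; ring.
have K2R : -((j-1)*((j*t)*(j*t)) + (1+j)*(t*t)) - (-2*j) = 0.
  have -> : -((j-1)*((j*t)*(j*t)) + (1+j)*(t*t)) - (-2*j)
     = -((j-1)*(j*j) + (1+j))*(t*t) + 2*j by ring.
  rewrite ht hj.
  ring.
have K2T : -(-(1+j)*(t*t) + -(1-j)*((-(j*t))*(-(j*t)))) - (-2) = 0.
  have -> : -(-(1+j)*(t*t) + -(1-j)*((-(j*t))*(-(j*t)))) - (-2)
     = -(-(1+j) + -(1-j)*(j*j))*(t*t) + 2 by ring.
  rewrite ht hj.
  have -> : -(-(1+j) + -(1-j) * -1) * j + 2 = 2 * (j*j) + 2 by ring.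
  by rewrite hj; ring.
have K2L : -((1-j)*((-(j*t))*(-(j*t))) + (-1-j)*((-t)*(-t))) - 2*j = 0.
  have -> : -((1-j)*((-(j*t))*(-(j*t))) + (-1-j)*((-t)*(-t))) - 2*j
     = -((1-j)*(j*j) + (-1-j))*(t*t) - 2*j by ring.
  rewrite ht hj.
  ring.
set LHS := (mB*xB + nB*yB) - _.
set RHS := (j*mL*xL - j*nL*yL) - _.
have E : (1+j)*((mB - (-t)*nB)*(xB + (-t)*yB)) + (1-j)*((mB - (j*t)*nB)*(xB + (j*t)*yB))
    + ((j-1)*((mR - (j*t)*nR)*(xR + (j*t)*yR)) + (1+j)*((mR - t*nR)*(xR + t*yR)))
    + (-(1+j)*((mT - t*nT)*(xT + t*yT)) + -(1-j)*((mT - (-(j*t))*nT)*(xT + (-(j*t))*yT)))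
    + ((1-j)*((mL - (-(j*t))*nL)*(xL + (-(j*t))*yL)) + (-1-j)*((mL - (-t)*nL)*(xL + (-t)*yL)))
  = 2 * (LHS - RHS)
    + ((1+j)*(-t) + (1-j)*(j*t)) * (mB*yB - nB*xB)
    + ((j-1)*(j*t) + (1+j)*t) * (mR*yR - nR*xR)
    + (-(1+j)*t + -(1-j)*(-(j*t))) * (mT*yT - nT*xT)
    + ((1-j)*(-(j*t)) + (-1-j)*(-t)) * (mL*yL - nL*xL)
    + (-((1+j)*((-t)*(-t)) + (1-j)*((j*t)*(j*t))) - 2) * (nB*yB)
    + (-((j-1)*((j*t)*(j*t)) + (1+j)*(t*t)) - (-2*j)) * (nR*yR)
    + (-(-(1+j)*(t*t) + -(1-j)*((-(j*t))*(-(j*t)))) - (-2)) * (nT*yT)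
    + (-((1-j)*((-(j*t))*(-(j*t))) + (-1-j)*((-t)*(-t))) - 2*j) * (nL*yL).
  rewrite /LHS /RHS; ring.
move: E; rewrite K1B K1R K1T K1L K2B K2R K2T K2L !mul0r !addr0.
rewrite h1 h1' h2' h2'' h3 h3' h4 h4'.
move=> E.
have : 2 * (LHS - RHS) = 0 by rewrite -E; ring.
move/eqP; rewrite mulf_eq0 (negPf h2) /= subr_eq0 => /eqP //.
Qed.

Local Open Scope complex_scope.
Section Cx.
Variable R : realType.

Lemma cplxE (x y : R) : x +i* y = x%:C + 'i * y%:C.
Proof. by rewrite [LHS]complexE. Qed.

Lemma hpt_diff (X Y e1 e2 : int) :
  hpt R (X + e1, Y + e2) - hpt R (X, Y) = (e1%:~R/2) +i* (e2%:~R/2).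
Proof.
rewrite /hpt /=. simpc. by rewrite !intrD; congr (_ +i* _); ring.
Qed.

Let h : R := 2^-1.
Let D : R[i] := h +i* h.
Let s : R[i] := `|D|.
Definition tt : R[i] := 'i * s / D.

Lemma hC : h%:C = 2^-1 :> R[i].
Proof. by rewrite /h fmorphV rmorph_nat. Qed.

Lemma DE : D = 2^-1 + 'i * 2^-1.
Proof. by rewrite /D cplxE hC. Qed.

Lemma D_neq0 : D != 0.
Proof. by rewrite /D /h; apply/eqP; case => /eqP; rewrite invr_eq0 pnatr_eq0. Qed.


Lemma i_neq0 : 'i != 0 :> R[i].
Proof. by apply/eqP; case => /eqP; rewrite oner_eq0. Qed.

Lemma ss : s * s = 2^-1.
Proof.
rewrite /s normc_def /= -rmorphM -expr2 sqr_sqrtr; last by rewrite addr_ge0 // sqr_ge0.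
by rewrite -hC; congr (_%:C); rewrite /h; field.
Qed.

Lemma tt2_gen (s0 D0 : R[i]) : s0 * s0 = 2^-1 -> D0 = 2^-1 + 'i * 2^-1 ->
  ('i * s0 / D0) * ('i * s0 / D0) = 'i.
Proof.
move=> hs hD.
have -> : ('i * s0 / D0) * ('i * s0 / D0) = 'i^+2 * (s0*s0) / D0 / D0 by ring.
have hDD : D0 * D0 = 'i / 2.
  have -> : D0 * D0 = 2^-1 * 2^-1 * (1 + 'i^+2) + 'i / 2.
    by rewrite hD; field.
  by rewrite sqr_i subrr mulr0 add0r.
have hne : 'i / 2 != 0 :> R[i].
  by rewrite mulf_eq0 negb_or i_neq0 invr_eq0 pnatr_eq0.
rewrite sqr_i hs -mulrA -invfM hDD.
apply: (mulIf hne). rewrite mulfVK //.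
by rewrite mulrA -expr2 sqr_i; field.
Qed.

Lemma tt2 : tt * tt = 'i.
Proof. apply: tt2_gen; [exact: ss | exact: DE]. Qed.

Lemma lam_gen (v p : int * int) (e1 e2 : int) : v.1 = p.1 + e1 -> v.2 = p.2 + e2 ->
  lam R v p = 'i * `|(e1%:~R/2) +i* (e2%:~R/2)| / ((e1%:~R/2) +i* (e2%:~R/2)).
Proof.
case: v p => [v1 v2] [p1 p2] /= -> ->.
by rewrite /lam hpt_diff.
Qed.


Lemma normD' (c : R[i]) : `|c| = 1 -> `|c * D| = s.
Proof. by move=> hc; rewrite normrM hc mul1r. Qed.

Lemma lam_TR (v p : int * int) : v.1 = p.1 + 1 -> v.2 = p.2 + 1 -> lam R v p = tt.
Proof.
move=> h1 h2; rewrite (@lam_gen v p _ _ h1 h2).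
have -> : ((1:int)%:~R/2) +i* ((1:int)%:~R/2) = D by rewrite /D /h; simpc.
by [].
Qed.

Lemma lam_BR (v p : int * int) : v.1 = p.1 + 1 -> v.2 = p.2 + -1 -> lam R v p = 'i * tt.
Proof.
move=> h1 h2; rewrite (@lam_gen v p _ _ h1 h2).
have -> : ((1:int)%:~R/2) +i* ((-1:int)%:~R/2) = (- 'i) * D by rewrite /D /h; simpc.
rewrite normD'; last by rewrite normrN normCi.
rewrite /tt.
have -> : 'i * ('i * s / D) = 'i^+2 * s / D by ring.
rewrite sqr_i. field. by rewrite D_neq0 i_neq0. Qed.

Lemma lam_TL (v p : int * int) : v.1 = p.1 + -1 -> v.2 = p.2 + 1 -> lam R v p = - ('i * tt).
Proof.
move=> h1 h2; rewrite (@lam_gen v p _ _ h1 h2).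
have -> : ((-1:int)%:~R/2) +i* ((1:int)%:~R/2) = 'i * D by rewrite /D /h; simpc.
rewrite normD'; last by rewrite normCi.
rewrite /tt.
have -> : - ('i * ('i * s / D)) = - ('i^+2 * s / D) by ring.
rewrite sqr_i. field. by rewrite D_neq0 i_neq0.
Qed.

Lemma lam_BL (v p : int * int) : v.1 = p.1 + -1 -> v.2 = p.2 + -1 -> lam R v p = - tt.
Proof.
move=> h1 h2; rewrite (@lam_gen v p _ _ h1 h2).
have -> : ((-1:int)%:~R/2) +i* ((-1:int)%:~R/2) = (-1) * D by rewrite /D /h; simpc.
rewrite normD'; last by rewrite normrN1.
rewrite /tt. field. by rewrite D_neq0.
Qed.
End Cx.

Lemma zip_iota (T : Type) (f : nat -> T) (i n : nat) :
  zip (map f (iota i n.+1)) (behead (map f (iota i n.+1))) =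
  map (fun k => (f k, f k.+1)) (iota i n).
Proof.
elim: n i => [|n IH] i //=.
by rewrite -IH.
Qed.

Ltac geo := rewrite /is_edge /is_vertex /adj /oddz /=; lia.

Theorem proposition3p13 (R : realType) (a b : int) (ha : a < 0) (hb : 0 < b)
  (psi psis : int * int -> Op R a b) (Hpsi : is_fermion psi psis)
  (m ms : int * int -> R[i]) (Hsh : ICSH a b m ms) (Hbv : ICRBV a b m ms) :
  forall y : int,
    cint m ms psi psis (gamma a b y) = cint m ms psi psis (gamma a b 0).
Proof.
set n := absz (b - a).
have hn : (n:int) = b - a by rewrite /n; lia.
pose hterm := fun z => m z *: psi z + ms z *: psis z.
pose Hs := fun y : int => \sum_(k <- iota 0 n) hterm (2*a + 2*k%:Z + 1, 2*y).
have Hc : forall y, cint m ms psi psis (gamma a b y) = Hs y.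
  move=> y0; rewrite /cint /gamma -/n zip_iota big_map /Hs.
  apply: eq_bigr => k _ /=.
  have -> : vpt R (a + k.+1%:Z, y0) - vpt R (a + k%:Z, y0) = 1.
    rewrite /vpt /=; simpc; rewrite complexr0 -intrB.
    rewrite (_ : a + k.+1%:Z - (a + k%:Z) = 1); last by lia.
    by rewrite -[(1:int)%:~R]/(1:R) rmorph1.
  rewrite conjC1 !mulr1 /hterm.
  by have -> : (a + k%:Z + (a + k.+1%:Z), y0 + y0) = (2*a + 2*k%:Z + 1, 2*y0) by congr pair; lia.
pose G := fun z => ('i * m z) *: psi z - ('i * ms z) *: psis z.
have hj : 'i * 'i = -1 :> R[i] by rewrite -expr2 sqr_i.
have h2 : (2 : R[i]) != 0 by rewrite pnatr_eq0.
have Hf := Hpsi.2.1.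
have face : forall X Y : int, (2*a < X)%R -> (X < 2*b)%R -> oddz X -> oddz Y ->
    hterm (X, Y - 1) - hterm (X, Y + 1) = G (X - 1, Y) - G (X + 1, Y).
  move=> X Y h1 h2' oX oY.
  have pf : is_face a b (X, Y) by move: oX oY; rewrite /is_face /oddz /=; lia.
  have corner : forall z1 z2 v l, is_edge a b z1 -> is_edge a b z2 -> is_vertex a b v ->
      adj z1 v -> adj z1 (X,Y) -> adj z2 v -> adj z2 (X,Y) -> lam R v (X,Y) = l ->
      (m z1 - l * ms z1 = m z2 - l * ms z2) /\
      (forall r c, psi z1 r c + l * psis z1 r c = psi z2 r c + l * psis z2 r c).
    move=> z1 z2 v l e1 e2 vv a1 a2 a3 a4 hl; split.
      by rewrite -hl; apply: Hsh.
    move=> r c; have := Hf z1 z2 v (X,Y) e1 e2 vv pf a1 a2 a3 a4.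
    by rewrite hl => /matrixP/(_ r c); rewrite !mxE.
  move: oX oY; rewrite /oddz => oX oY.
  have [BRm BRv] := @corner (X, Y - 1) (X + 1, Y) (X + 1, Y - 1) ('i * tt R)
    ltac:(geo) ltac:(geo) ltac:(geo) ltac:(geo) ltac:(geo) ltac:(geo) ltac:(geo)
    (@lam_BR R (X + 1, Y - 1) (X, Y) erefl erefl).
  have [TRm TRv] := @corner (X + 1, Y) (X, Y + 1) (X + 1, Y + 1) (tt R)
    ltac:(geo) ltac:(geo) ltac:(geo) ltac:(geo) ltac:(geo) ltac:(geo) ltac:(geo)
    (@lam_TR R (X + 1, Y + 1) (X, Y) erefl erefl).
  have [TLm TLv] := @corner (X, Y + 1) (X - 1, Y) (X - 1, Y + 1) (- ('i * tt R))
    ltac:(geo) ltac:(geo) ltac:(geo) ltac:(geo) ltac:(geo) ltac:(geo) ltac:(geo)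
    (@lam_TL R (X - 1, Y + 1) (X, Y) erefl erefl).
  have [BLm BLv] := @corner (X - 1, Y) (X, Y - 1) (X - 1, Y - 1) (- tt R)
    ltac:(geo) ltac:(geo) ltac:(geo) ltac:(geo) ltac:(geo) ltac:(geo) ltac:(geo)
    (@lam_BL R (X - 1, Y - 1) (X, Y) erefl erefl).
  apply/matrixP => r c; rewrite !mxE.
  exact: (face_sc hj (tt2 R) h2 BRm (BRv r c) TRm (TRv r c) TLm (TLv r c) BLm (BLv r c)).
have bd : forall z, (m z = 'i * ms z /\ forall r c, psi z r c = - ('i * psis z r c)) \/
                     (m z = - ('i * ms z) /\ forall r c, psi z r c = 'i * psis z r c) ->
    G z = 0.
  move=> z [[hm hx]|[hm hx]]; apply/matrixP => r c; rewrite !mxE hm hx.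
    have -> : 'i * ('i * ms z) * - ('i * psis z r c) - 'i * ms z * psis z r c
        = - ('i * 'i + 1) * ('i * ms z * psis z r c) by ring.
    by rewrite hj; ring.
  have -> : 'i * - ('i * ms z) * ('i * psis z r c) - 'i * ms z * psis z r c
      = - ('i * 'i + 1) * ('i * ms z * psis z r c) by ring.
  by rewrite hj; ring.
have GL : forall Y, oddz Y -> G (2 * a, Y) = 0.
  move=> Y oY; apply: bd; left.
  have lb : left_bdry a b (2 * a, Y) by rewrite /left_bdry /= eqxx.
  split; first by apply/eqP; rewrite -subr_eq0; apply/eqP; exact: Hbv.1 _ lb.
  move=> r c; have := Hpsi.2.2.1 _ lb => /matrixP/(_ r c); rewrite !mxE => /eqP.
  by rewrite addr_eq0 => /eqP.
have GR : forall Y, oddz Y -> G (2 * b, Y) = 0.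
  move=> Y oY; apply: bd; right.
  have rb : right_bdry a b (2 * b, Y) by rewrite /right_bdry /= eqxx.
  split; first by apply/eqP; rewrite -addr_eq0; apply/eqP; exact: Hbv.2 _ rb.
  move=> r c; have := Hpsi.2.2.2 _ rb => /matrixP/(_ r c); rewrite !mxE => /eqP.
  by rewrite subr_eq0 => /eqP.
have step : forall y, Hs y = Hs (y + 1).
  move=> y; apply/eqP; rewrite -subr_eq0; apply/eqP.
  rewrite /Hs -sumrB.
  pose g := fun k : nat => G (2 * a + 2 * k%:Z, 2 * y + 1).
  have -> : iota 0 n = index_iota 0 n by rewrite /index_iota subn0.
  rewrite (@telescope_sumr_eq _ 0 n (fun k => - g k)) //.
    rewrite /g (_ : 2 * a + 2 * n%:Z = 2 * b); last by lia.
    rewrite (_ : 2 * a + 2 * (0%N)%:Z = 2 * a); last by lia.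
    rewrite GL ?GR ?oppr0 ?subr0 ?addr0 //; rewrite /oddz; lia.
  move=> k /andP [_ hk]; rewrite opprK /g.
  have := face (2 * a + 2 * k%:Z + 1) (2 * y + 1) ltac:(lia) ltac:(lia)
    ltac:(rewrite /oddz; lia) ltac:(rewrite /oddz; lia).
  rewrite (_ : 2 * y + 1 - 1 = 2 * y); last by lia.
  rewrite (_ : 2 * y + 1 + 1 = 2 * (y + 1)); last by lia.
  rewrite (_ : 2 * a + 2 * k%:Z + 1 - 1 = 2 * a + 2 * k%:Z); last by lia.
  rewrite (_ : 2 * a + 2 * k%:Z + 1 + 1 = 2 * a + 2 * k.+1%:Z); last by lia.
  by move=> ->; rewrite addrC.
have Hall : forall y, Hs y = Hs 0.
  elim/int_rec => [|k IH|k IH] //.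
    rewrite -IH; have := step k; rewrite (_ : k%:Z + 1 = k.+1%:Z); [by move=> -> | lia].
  rewrite -IH (step (- k.+1%:Z)).
  by rewrite (_ : - k.+1%:Z + 1 = - k%:Z); last by lia.
by move=> y; rewrite !Hc Hall.
Qed.
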